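(* Let $A\in\mathbb{R}^{m\times N}$ and $K,S\subset[N]$. Suppose $\mathbb{1}_K$ is the unique solution of $$\min\|x\|_1\ \text{subject to}\ Ax=b,\ x\in[0,1]^N \qquad (P_{\mathrm{bin}})$$ with $b=A\mathbb{1}_K$, and $\mathbb{1}_S$ is the unique solution of $(P_{\mathrm{bin}})$ with $b=A\mathbb{1}_S$. Then $\ker(A)\cap H_K\cap H_{S^c}=\{0\}$.
   Context: $[N]=\{1,\dots,N\}$; $\mathbb{1}_K\in\{0,1\}^N$ denotes the indicator vector of $K$, and $S^c=[N]\setminus S$. For $K\subset[N]$, $H_K=\{w\in\mathbb{R}^N: w_i\le 0 \text{ for } i\in K,\ w_i\ge 0 \text{ for } i\notin K\}$. *)

(* Defs.v *)
From mathcomp Require Import all_boot all_order all_algebra.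
From mathcomp Require Import reals.
Set Implicit Arguments. Unset Strict Implicit. Unset Printing Implicit Defensive.
Import Order.TTheory GRing.Theory Num.Theory.
Local Open Scope ring_scope.

Definition indic {R : realType} {N : nat} (K : {set 'I_N}) : 'cV[R]_N :=
  \col_i (if i \in K then 1 else 0).

Definition l1norm {R : realType} {N : nat} (x : 'cV[R]_N) : R :=
  \sum_i `|x i 0|.

Definition feasible_bin {R : realType} {m N : nat} (A : 'M[R]_(m, N))
  (b : 'cV[R]_m) (x : 'cV[R]_N) : Prop :=
  A *m x = b /\ (forall i, 0 <= x i 0 <= 1).

Definition unique_sol_Pbin {R : realType} {m N : nat} (A : 'M[R]_(m, N))
  (b : 'cV[R]_m) (x : 'cV[R]_N) : Prop :=
  feasible_bin A b x /\
  (forall z, feasible_bin A b z -> z <> x -> l1norm x < l1norm z).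

Definition H_ {R : realType} {N : nat} (K : {set 'I_N}) : {pred 'cV[R]_N} :=
  fun w => [forall i, if i \in K then w i 0 <= 0 else 0 <= w i 0].

(* Main.v *)
Require Import Defs.
From mathcomp Require Import all_boot all_order all_algebra.
From mathcomp Require Import reals.
From mathcomp Require Import lra.
Import Order.TTheory GRing.Theory Num.Theory.
Local Open Scope ring_scope.

Lemma l1pos (R : realType) (N : nat) (x : 'cV[R]_N) :
  (forall i, 0 <= x i 0) -> l1norm x = \sum_i x i 0.
Proof. by move=> h; apply: eq_bigr => i _; rewrite ger0_norm. Qed.

Lemma key (R : realType) (m N : nat) (A : 'M[R]_(m, N)) (K : {set 'I_N})
  (d : 'cV[R]_N) :
  unique_sol_Pbin A (A *m indic K) (indic K) -> A *m d = 0 ->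
  d \in H_ K -> d != 0 -> 0 < \sum_i d i 0.
Proof.
move=> [_ hu] hd hH dn0.
set s := 1 + \sum_i `|d i 0|.
have hs : 0 < s by rewrite /s ltr_pwDl // sumr_ge0.
set t := s^-1.
have ht : 0 < t by rewrite invr_gt0.
have htd : forall i, t * `|d i 0| <= 1.
  move=> i; rewrite mulrC ler_pdivrMr // mul1r /s (bigD1 i) //=.
  by rewrite addrCA lerDl addr_ge0 // sumr_ge0.
set x := indic K + t *: d.
have hx : forall i, x i 0 = (if i \in K then 1 else 0) + t * d i 0.
  by move=> i; rewrite !mxE.
have fx : feasible_bin A (A *m indic K) x.
  split; first by rewrite mulmxDr -scalemxAr hd scaler0 addr0.
  move=> i; rewrite hx; move/forallP: hH => /(_ i).
  have := htd i.
  case: (i \in K) => hi hdi.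
    rewrite ler0_norm // in hi; apply/andP; split; nra.
  rewrite ger0_norm // in hi; apply/andP; split; nra.
have xne : x <> indic K.
  move=> heq; have := congr1 (fun v => v - indic K) heq.
  rewrite /= /x addrC addKr subrr => /eqP; rewrite scaler_eq0.
  by rewrite (negPf dn0) orbF gt_eqF.
have := hu x fx xne.
have [_ fK] : feasible_bin A (A *m indic K) (indic K).
  split => // i; rewrite mxE; by case: (i \in K); rewrite ?lexx ?ler01.
rewrite (@l1pos _ _ _ (fun i => proj1 (andP (fK i)))) (@l1pos _ _ _ (fun i => proj1 (andP (proj2 fx i)))).
under [X in _ < X]eq_bigr do rewrite hx.
rewrite big_split /= -mulr_sumr.
have -> : \sum_i indic K i 0 = \sum_i (if i \in K then 1 else 0 : R).
  by apply: eq_bigr => i _; rewrite mxE.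
rewrite ltrDl => h; by rewrite -(pmulr_rgt0 _ ht).
Qed.

Theorem theorem2p2 (R : realType) (m N : nat) (A : 'M[R]_(m, N))
  (K S : {set 'I_N}) :
  unique_sol_Pbin A (A *m indic K) (indic K) ->
  unique_sol_Pbin A (A *m indic S) (indic S) ->
  forall w : 'cV[R]_N,
    A *m w = 0 -> w \in H_ K -> w \in H_ (~: S) -> w = 0.
Proof.
move=> hK hS w hw wK wS; apply/eqP; apply/negPn/negP => wn0.
have h1 := @key _ _ _ _ _ _ hK hw wK wn0.
have h2 : 0 < \sum_i (- w) i 0.
  apply: (@key _ _ _ _ _ _ hS); first by rewrite mulmxN hw oppr0.
    apply/forallP => i; move/forallP: wS => /(_ i); rewrite in_setC mxE.
    by case: (i \in S) => /=; rewrite ?oppr_le0 ?oppr_ge0.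
  by rewrite oppr_eq0.
have e : \sum_i (- w) i 0 = \sum_i - w i 0 by apply: eq_bigr => i _; rewrite mxE.
rewrite e in h2.
by rewrite sumrN oppr_gt0 in h2; move: h1; rewrite ltNge ltW.
Qed.
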